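(* Let $(X,\leqslant)$ be a finite poset, $U$ a finite set of users with security function $\lambda\colon U\to X$, and $T=(X,E)$ a derivation out-tree with root $r$. Let $\phi=\phi_E$ be the key allocation function determined by $T$. Then \[ \sum_{x\in X,\ x\neq r}|U(x)|\cdot|\phi(x)| \;=\; \sum_{e\in E}\omega(e). \]
   Context: A derivation out-tree for $(X,\leqslant)$ is a spanning out-tree $T=(X,E)$ (a rooted tree on vertex set $X$ with all arcs oriented away from the root) such that $xy\in E$ implies $y<x$; its root $r$ is then the maximum element of $X$. Define $\phi_E\colon X\to 2^X$ by $\phi_E(r)=\{r\}$ and, for $x\neq r$, $\phi_E(x)=\{z\in X:\exists y\in X \text{ with } yz\in E,\ x\geqslant z,\ x\not\geqslant y\}$. For $u\in U$ write $U(x)=\{u\in U:\lambda(u)=x\}$. For $y,z\in X$ with $z<y$, let $\gamma(yz)=\{x\in X: x\geqslant z,\ x\not\geqslant y\}$ and define the weight $\omega(yz)=\sum_{x\in\gamma(yz)}|U(x)|$. *)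

(* Defs.v *)
From mathcomp Require Import all_boot all_order.
Set Implicit Arguments. Unset Strict Implicit. Unset Printing Implicit Defensive.
Import Order.Theory.
Local Open Scope order_scope.

Section Defs.
Variables (d : Order.disp_t) (X : finPOrderType d).

(* A spanning out-tree on vertex set X with root r, arc set given by the
   relation E (E y z means the arc y -> z). *)
Definition is_out_tree (E : rel X) (r : X) : Prop :=
  [/\ forall y, ~~ E y r,
      forall z, z != r -> #|[set y | E y z]| = 1%N
    & forall x, connect E r x].

Definition is_derivation_out_tree (E : rel X) (r : X) : Prop :=
  is_out_tree E r /\ forall x y, E x y -> y < x.

Definition phi (E : rel X) (r : X) (x : X) : {set X} :=
  if x == r then [set r]
  else [set z | [exists y, E y z && (z <= x) && ~~ (y <= x)]].

Variables (U : finType) (lam : U -> X).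

Definition Uof (x : X) : {set U} := [set u | lam u == x].

Definition gamma (y z : X) : {set X} := [set x | (z <= x) && ~~ (y <= x)].

Definition omega (y z : X) : nat := (\sum_(x in gamma y z) #|Uof x|)%N.

End Defs.

(* Main.v *)
Require Import Defs.
From mathcomp Require Import all_boot all_order.
Import Order.Theory.
Local Open Scope order_scope.

Lemma path_last_le (d : Order.disp_t) (X : finPOrderType d) (E : rel X) :
  (forall x y, E x y -> y < x) ->
  forall p a, path E a p -> last a p <= a.
Proof.
move=> HE; elim=> [|b p IH] a /=; first by [].
case/andP=> Hab Hp; apply: le_trans (IH _ Hp) _.
exact: ltW (HE _ _ Hab).
Qed.

Theorem theorem2 (d : Order.disp_t) (X : finPOrderType d) (U : finType)
  (lam : U -> X) (E : rel X) (r : X) :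
  is_derivation_out_tree E r ->
  (\sum_(x : X | x != r) #|Uof lam x| * #|phi E r x|)%N =
  (\sum_(e : X * X | E e.1 e.2) omega lam e.1 e.2)%N.
Proof.
case=> [[Hr Hpar Hconn] HE].
have Hmax : forall x, x <= r.
  move=> x; case/connectP: (Hconn x) => p Hp ->; exact: path_last_le Hp.
rewrite /omega.
rewrite (exchange_big_dep predT) //=.
rewrite [RHS](bigD1 r) //=.
rewrite [X in _ = X + _]big1; last first.
  by move=> e; rewrite /gamma inE !Hmax andbF.
rewrite add0n; apply: eq_bigr => x Hx.
rewrite sum_nat_cond_const mulnC; congr (_ * _)%N.
set A := [set e : X * X | E e.1 e.2 && (e.1 \in predT) && (x \in gamma e.1 e.2)].
have -> : phi E r x = [set e.2 | e in A].
  rewrite /phi (negbTE Hx); apply/setP => z; rewrite inE.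
  apply/existsP/imsetP.
    case=> y /andP[/andP[Eyz zx] yx]; exists (y, z) => //.
    have Hg : x \in gamma y z by rewrite /gamma inE zx yx.
    rewrite /A inE /=; apply/andP; split; [by apply/andP | exact: Hg].
  case=> [[y z'] ]; rewrite inE /= => /andP[/andP[Eyz _] Hg] ->.
  move: Hg; rewrite /gamma inE => /andP[zx yx].
  by exists y; rewrite Eyz zx yx.
rewrite card_in_imset; first by apply: eq_card => e; rewrite /A !inE andbT.
move=> [y1 z1] [y2 z2]; rewrite !inE /= => /andP[/andP[E1 _] _] /andP[/andP[E2 _] _] Hz.
subst z2.
have Hz1 : z1 != r by apply/eqP => Hz; move: E1; rewrite Hz (negbTE (Hr y1)).
have /eqP := Hpar _ Hz1; case/cards1P => w Hw.
have : y1 \in [set y | E y z1] by rewrite inE.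
have : y2 \in [set y | E y z1] by rewrite inE.
by rewrite Hw !inE => /eqP -> /eqP ->.
Qed.
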